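(* Let $p\in(0,1)$, let $t$ be a formal indeterminate, and for $n\ge1$ let $X_n$ be the maximum weight of a directed path from $1$ to $n$ in the transitive tournament on $\{1,\ldots,n\}$ with independent $\mathrm{Bernoulli}(p)$ edge weights. Write $\mathbb{E}[Y_n]=\mathbb{E}[t^{X_n}]=\sum_{k\ge0}\Pr[X_n=k]\,t^k$ for the probability generating function. Then for every $n\ge1$, \[ \mathbb{E}[Y_n]=\sum_{i=1}^{n-1} t\left[(1-p)^{\binom{i}{2}}-(1-p)^{\binom{i+1}{2}}\right]\mathbb{E}[Y_{n-i}]+(1-p)^{\binom{n}{2}}. \] Consequently, with $\mathbb{E}[Y_0]:=1$ and $Z(x,t)=\sum_{n\ge0}\mathbb{E}[Y_n]x^n$, we have \[ Z(x,t)=1+\frac{xB_p(x)}{1-t\,[A_p(x)-B_p(x)]}, \] where $A_p(x)=\sum_{n\ge0}(1-p)^{\binom{n}{2}}x^n$ and $B_p(x)=\sum_{n\ge0}(1-p)^{\binom{n+1}{2}}x^n$.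
   Context: The transitive tournament on $\{1,\ldots,n\}$ has a directed edge $(i,j)$ for every $1\le i<j\le n$. The edge weights $w(i,j)\in\{0,1\}$ are independent, and each equals $1$ with probability $p$. The weight of a path is the sum of its edge weights, and $X_n$ is the maximum weight of a directed path from $1$ to $n$; in particular $X_1=0$. Binomial coefficients satisfy $\binom{0}{2}=\binom{1}{2}=0$. The identity for $Z$ is an identity of formal power series in $x$ whose coefficients are polynomials in $t$. *)

(* Defs.v *)
From HB Require Import structures.
From mathcomp Require Import all_boot all_order all_algebra.
Set Implicit Arguments. Unset Strict Implicit. Unset Printing Implicit Defensive.
Import Order.TTheory GRing.Theory Num.Theory.
Local Open Scope ring_scope.

(* Vertices of the transitive tournament on n vertices are 0,...,n-1
   (the paper's 1,...,n shifted by one).  Edges are the pairs (i,j), i<j. *)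
Definition edge (n : nat) := {e : 'I_n * 'I_n | (e.1 < e.2)%N}.

Definition weights (n : nat) := {ffun edge n -> bool}.

Definition wt (n : nat) (w : weights n) (a b : nat) : nat :=
  [exists e : edge n, ((val (val e).1, val (val e).2) == (a, b)) && w e].

Definition path_weight (n : nat) (w : weights n) (s : seq nat) : nat :=
  \sum_(e <- zip s (behead s)) wt w e.1 e.2.

(* A directed path in the transitive tournament is determined by its vertex
   set (vertices are visited in increasing order). *)
Definition path_of (n : nat) (S : {set 'I_n}) : seq nat :=
  sort leq [seq val i | i <- enum S].

Definition is_path (n : nat) (S : {set 'I_n}) : bool :=
  (0%N \in path_of S) && (n.-1 \in path_of S).

Definition Xmax (n : nat) (w : weights n) : nat :=
  \max_(S : {set 'I_n} | is_path S) path_weight w (path_of S).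

Definition prob {R : realFieldType} (p : R) (n : nat) (w : weights n) : R :=
  \prod_(e : edge n) (if w e then p else 1 - p).

Definition EY {R : realFieldType} (p : R) (n : nat) : {poly R} :=
  \sum_(w : weights n) (prob p w)%:P * 'X^(Xmax w).

(* Formal power series in x with coefficients in a ring T (here {poly R}). *)
Definition fps (T : Type) := nat -> T.

Definition fps_one {T : nzRingType} : fps T := fun k => if k == 0%N then 1 else 0.
Definition fps_add {T : nzRingType} (f g : fps T) : fps T := fun k => f k + g k.
Definition fps_sub {T : nzRingType} (f g : fps T) : fps T := fun k => f k - g k.
Definition fps_scale {T : nzRingType} (c : T) (f : fps T) : fps T := fun k => c * f k.
Definition fps_xmul {T : nzRingType} (f : fps T) : fps T :=
  fun k => if k is m.+1 then f m else 0.
Definition fps_mul {T : nzRingType} (f g : fps T) : fps T :=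
  fun k => \sum_(i < k.+1) f i * g (k - i)%N.

(* coefficients g_0, ..., g_n of the multiplicative inverse g of f
   (meaningful when f 0 is a unit): g_0 = f_0^-1,
   g_m = - f_0^-1 * sum_{k=1}^m f_k g_{m-k}. *)
Fixpoint inv_coefs {T : unitRingType} (f : fps T) (n : nat) : seq T :=
  match n with
  | 0 => [:: (f 0%N)^-1]
  | m.+1 => let s := inv_coefs f m in
            rcons s (- (f 0%N)^-1 *
                     \sum_(k < m.+1) f k.+1 * nth 0 s (m - k)%N)
  end.

Definition fps_inv {T : unitRingType} (f : fps T) : fps T :=
  fun k => nth 0 (inv_coefs f k) k.

Definition Ap {R : realFieldType} (p : R) : fps {poly R} :=
  fun n => ((1 - p) ^+ 'C(n, 2))%:P.
Definition Bp {R : realFieldType} (p : R) : fps {poly R} :=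
  fun n => ((1 - p) ^+ 'C(n.+1, 2))%:P.
Definition Zser {R : realFieldType} (p : R) : fps {poly R} :=
  fun n => if n == 0%N then 1 else EY p n.

(* Main.v *)
Require Import Defs.
From HB Require Import structures.
From mathcomp Require Import all_boot all_order all_algebra zify ring.
From Stdlib Require Import FunctionalExtensionality.
Import Order.TTheory GRing.Theory Num.Theory.

Definition shift (i : nat) (g : nat * nat -> bool) : nat * nat -> bool :=
  fun e => g (e.1 + i, e.2 + i).

Fixpoint Bf (fuel m : nat) (g : nat * nat -> bool) : nat :=
  if fuel is f.+1 then \max_(k < m) (g (0, k.+1) + Bf f (m - k.+1) (shift k.+1 g))
  else 0.
Definition B m g := Bf m m g.

Definition pw (g : nat * nat -> bool) (s : seq nat) : nat :=
  \sum_(e <- zip s (behead s)) g (e.1, e.2).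
Definition XM n g := \max_(S : {set 'I_n} | is_path S) pw g (path_of S).

Definition Wg (T : finType) (h : T -> nat * nat) (f : {ffun T -> bool}) :=
  fun k => [exists e, (h e == k) && f e].
Arguments Wg {T}.
Definition hE n (e : edge n) := (val (val e).1, val (val e).2).

Lemma Xmax_XM n (w : weights n) : Xmax w = XM n (Wg (@hE n) w).
Proof. reflexivity. Qed.

Lemma funext A B (f g : A -> B) : (forall x, f x = g x) -> f = g.
Proof. exact: functional_extensionality. Qed.

Lemma shiftD i j g : shift i (shift j g) = shift (i + j) g.
Proof. by apply: funext => -[a b]; rewrite /shift /= !addnA. Qed.
Lemma shift0 g : shift 0 g = g.
Proof. by apply: funext => -[a b]; rewrite /shift /= !addn0. Qed.

Lemma Bf_fuel f1 f2 m g : m <= f1 -> m <= f2 -> Bf f1 m g = Bf f2 m g.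
Proof.
elim: f1 f2 m g => [|f1 IH] [|f2] m g /=; rewrite ?leqn0.
- by [].
- by move=> /eqP -> _; rewrite big_ord0.
- by move=> _ /eqP ->; rewrite big_ord0.
move=> h1 h2; apply: eq_bigr => k _; congr (_ + _); apply: IH.
  by rewrite leq_subLR (leq_trans h1) // addSn ltnS leq_addl.
by rewrite leq_subLR (leq_trans h2) // addSn ltnS leq_addl.
Qed.

Lemma B_unfold m (g : nat * nat -> bool) :
  B m g = \max_(k < m) (g (0, k.+1) + B (m - k.+1) (shift k.+1 g)).
Proof.
case: m => [|m]; first by rewrite /B /= big_ord0.
rewrite /B /=; apply: eq_bigr => k _; congr (_ + _); apply: Bf_fuel => //.
by rewrite subSS leq_subr.
Qed.

Lemma B_ge m j (g : nat * nat -> bool) : 0 < j <= m -> g (0, j) + B (m - j) (shift j g) <= B m g.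
Proof.
case: j => [//|j] /= hj; rewrite [B m g]B_unfold.
exact: (@leq_bigmax _ (fun k : 'I_m => g (0, k.+1) + B (m - k.+1) (shift k.+1 g)) (Ordinal hj)).
Qed.

Lemma B_mono m j (g : nat * nat -> bool) : j <= m -> B (m - j) (shift j g) <= B m g.
Proof.
case: j => [|j] hj; first by rewrite subn0 shift0.
apply: leq_trans (B_ge m j.+1 g hj); exact: leq_addl.
Qed.

Lemma B_zero m (g : nat * nat -> bool) :
  (forall a b, a < b -> b <= m -> g (a, b) = false) -> B m g = 0.
Proof.
move: g; elim/ltn_ind: m => m IH g H.
rewrite B_unfold; apply/eqP; rewrite -leqn0; apply/bigmax_leqP => k _.
have km := ltn_ord k.
rewrite H // IH //; first lia.
move=> a b ab bm; rewrite /shift /=; apply: H; lia.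
Qed.

Lemma B_local m (g1 g2 : nat * nat -> bool) :
  (forall a b, a < b -> b <= m -> g1 (a, b) = g2 (a, b)) -> B m g1 = B m g2.
Proof.
move: g1 g2; elim/ltn_ind: m => m IH g1 g2 H.
rewrite !B_unfold; apply: eq_bigr => k _.
have km := ltn_ord k.
rewrite H //; congr (_ + _); apply: IH; first lia.
move=> a b ab bm; rewrite /shift /=; apply: H; lia.
Qed.

Lemma B_Ai m i (g : nat * nat -> bool) : 0 < i <= m ->
  (forall a b, a < b -> b < i -> g (a, b) = false) ->
  (exists2 a, a < i & g (a, i)) -> B m g = (B (m - i) (shift i g)).+1.
Proof.
move=> /andP[i0 im] H [a0 a0i ga0].
apply/eqP; rewrite eqn_leq; apply/andP; split.
- have key : forall d a, i - a <= d -> a < i ->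
      B (m - a) (shift a g) <= (B (m - i) (shift i g)).+1.
    elim=> [|d IH] a hd ha; first lia.
    rewrite B_unfold; apply/bigmax_leqP => k _.
    have km := ltn_ord k.
    rewrite shiftD.
    have -> : shift a g (0, k.+1) = g (a, k.+1 + a) by rewrite /shift /= add0n.
    have -> : m - a - k.+1 = m - (k.+1 + a) by lia.
    case: (ltnP (k.+1 + a) i) => h.
      rewrite H; [|lia|lia]; rewrite add0n; apply: IH => //; lia.
    have hle : k.+1 + a - i <= m - i by lia.
    have := B_mono (m - i) (k.+1 + a - i) (shift i g) hle.
    rewrite shiftD subnK //.
    have -> : m - i - (k.+1 + a - i) = m - (k.+1 + a) by lia.
    move=> hB; have : (g (a, k.+1 + a) : nat) <= 1 by case: (g _).
    lia.
  by have := key i 0 (leq_subr _ _) i0; rewrite subn0 shift0.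
- have h1 := B_mono m a0 g (_ : a0 <= m).
  have h2 := B_ge (m - a0) (i - a0) (shift a0 g) (_ : 0 < i - a0 <= m - a0).
  rewrite shiftD subnK in h2; last exact: ltnW.
  have e1 : shift a0 g (0, i - a0) = g (a0, i) by rewrite /shift /= add0n subnK // ltnW.
  rewrite e1 ga0 in h2.
  have e2 : m - a0 - (i - a0) = m - i by lia.
  rewrite e2 in h2.
  apply: leq_trans (h2 _) (h1 _); lia.
Qed.

Lemma last_ge x s y : path ltn x s -> y \in x :: s -> y <= last x s.
Proof.
elim: s x y => [|z s IH] x y /=; first by move=> _; rewrite inE => /eqP ->.
move=> /andP[xz pz]; rewrite inE => /orP[/eqP ->|ys].
  exact: leq_trans (ltnW xz) (IH z z pz (mem_head _ _)).
exact: IH.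
Qed.

Lemma pw_cons2 g a k s : pw g [:: a, k & s] = g (a, k) + pw g (k :: s).
Proof. by rewrite /pw /= big_cons. Qed.

Lemma path_le a s m g : path ltn a s -> last a s = m ->
  pw g (a :: s) <= B (m - a) (shift a g).
Proof.
elim: s a => [|k s IH] a /=; first by move=> _ <-; rewrite /pw /= big_nil.
move=> /andP[ak pk] hl.
rewrite pw_cons2.
have km : k <= m by rewrite -hl; apply: last_ge pk (mem_head _ _).
have hc : 0 < k - a <= m - a by lia.
apply: (leq_trans _ (B_ge (m - a) (k - a) (shift a g) hc)).
rewrite (shiftD (k - a) a g) (subnK (ltnW ak)).
have -> : shift a g (0, k - a) = g (a, k) by rewrite /shift /= add0n subnK // ltnW.
rewrite leq_add2l.
have -> : m - a - (k - a) = m - k by lia.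
exact: IH pk hl.
Qed.

Lemma path_ex m g : forall d a, m - a <= d -> a <= m -> exists s,
  [/\ path ltn a s, last a s = m & pw g (a :: s) = B (m - a) (shift a g)].
Proof.
elim=> [|d IH] a hd ham.
  have -> : a = m by lia.
  by exists [::]; split => //; rewrite subnn B_unfold big_ord0 /pw /= big_nil.
case: (eqVneq a m) => [->|ne].
  by exists [::]; split => //; rewrite subnn B_unfold big_ord0 /pw /= big_nil.
have pos : 0 < #|'I_(m - a)| by rewrite card_ord; lia.
have [k hk] := bigop.eq_bigmax (fun k : 'I_(m - a) =>
   shift a g (0, k.+1) + B (m - a - k.+1) (shift k.+1 (shift a g))) pos.
have km := ltn_ord k.
have hs1 : m - (k.+1 + a) <= d by lia.
have hs2 : k.+1 + a <= m by lia.
have [s [ps ls ws]] := IH (k.+1 + a) hs1 hs2.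
exists (k.+1 + a :: s); split.
- by rewrite /= ps andbT; lia.
- by rewrite /= ls.
rewrite B_unfold hk pw_cons2 ws (shiftD k.+1 a g).
have -> : shift a g (0, k.+1) = g (a, k.+1 + a) by rewrite /shift /= add0n.
by have -> : m - a - k.+1 = m - (k.+1 + a) by lia.
Qed.

Lemma XM_B n g : 0 < n -> XM n g = B n.-1 g.
Proof.
move=> n0; apply/eqP; rewrite eqn_leq; apply/andP; split.
- apply/bigmax_leqP => S hS.
  set l := path_of S.
  have sl : sorted ltn l.
    rewrite ltn_sorted_uniq_leq sort_uniq sort_sorted ?andbT; last exact: leq_total.
    by rewrite map_inj_uniq ?enum_uniq //; exact: val_inj.
  have lt_n : forall x, x \in l -> x < n.
    by move=> x; rewrite mem_sort => /mapP [i _ ->]; exact: ltn_ord.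
  move: hS; rewrite /is_path -/l => /andP[h0 hn].
  case El : l sl h0 hn lt_n => [|x s] //= ps h0 hn ltn_.
  have x0 : x = 0.
    move: h0; rewrite inE => /orP[/eqP -> //|h].
    by have := order_path_min ltn_trans ps => /allP /(_ _ h).
  subst x.
  have lm : last 0 s = n.-1.
    have h1 := last_ge _ _ _ ps hn.
    have h2 := ltn_ (last 0 s) (mem_last 0 s).
    lia.
  by have := path_le _ _ _ g ps lm; rewrite subn0 shift0.
- have [s [ps ls ws]] := path_ex n.-1 g (n.-1) 0 (leq_subr _ _) (leq0n _).
  rewrite subn0 shift0 in ws; rewrite -ws.
  pose S := [set i : 'I_n | val i \in 0 :: s].
  have lt_n : forall x, x \in 0 :: s -> x < n.
    by move=> x hx; have := last_ge _ _ _ ps hx; lia.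
  have s01 : sorted ltn (0 :: s) by [].
  have pS : path_of S = 0 :: s.
    apply: (sorted_eq leq_trans anti_leq).
    - exact: (sort_sorted leq_total).
    - by move: s01; rewrite ltn_sorted_uniq_leq => /andP[].
    rewrite perm_sort; apply: uniq_perm.
    - by rewrite map_inj_uniq ?enum_uniq //; exact: val_inj.
    - by move: s01; rewrite ltn_sorted_uniq_leq => /andP[].
    move=> x; apply/mapP/idP => [[i]|hx].
      by rewrite mem_enum inE => hi ->.
    by exists (Ordinal (lt_n x hx)); rewrite ?mem_enum ?inE.
  have iS : is_path S by rewrite /is_path pS mem_head /= -ls mem_last.
  by have := @leq_bigmax_cond _ _ (fun S => pw g (path_of S)) S iS; rewrite pS.
Qed.

Fixpoint EL n : seq (nat * nat) :=
  if n is m.+1 then EL m ++ [seq (a, m) | a <- iota 0 m] else [::].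

Lemma mem_EL n a b : ((a, b) \in EL n) = (a < b) && (b < n).
Proof.
elim: n => [|n IH] /=; first by rewrite andbF.
rewrite mem_cat IH; apply/orP/andP => [[/andP[h1 h2]|/mapP[x]]|[h1 h2]].
- by split => //; exact: ltnW.
- by rewrite mem_iota add0n => /andP[_ xn] [-> ->].
case: (ltngtP b n) => [bn|//|eb]; first by left; rewrite h1.
  by move: h2; rewrite ltnS leqNgt => /negP.
by right; apply/mapP; exists a; rewrite ?mem_iota ?add0n -?eb.
Qed.

Lemma mem_EL' n e : (e \in EL n) = (e.1 < e.2) && (e.2 < n).
Proof. by case: e => a b; rewrite mem_EL. Qed.

Lemma uniq_EL n : uniq (EL n).
Proof.
elim: n => [|n IH] //=; rewrite cat_uniq IH /=.
rewrite map_inj_uniq ?iota_uniq ?andbT; last by move=> x y [].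
apply/hasPn => e /mapP[x _ ->]; by rewrite mem_EL ltnn andbF.
Qed.

Lemma size_EL n : size (EL n) = 'C(n, 2).
Proof.
elim: n => [|n IH] //=; by rewrite size_cat IH size_map size_iota binS bin1.
Qed.

Section ExSec.
Variables (R : realFieldType) (p : R).
Local Open Scope ring_scope.

Definition upd (g : nat * nat -> bool) k b := fun k' => if k' == k then b else g k'.

Fixpoint Ex (L : seq (nat * nat)) (F : (nat * nat -> bool) -> {poly R})
    (g : nat * nat -> bool) : {poly R} :=
  if L is e :: L' then p%:P * Ex L' F (upd g e true) + (1 - p)%:P * Ex L' F (upd g e false)
  else F g.

Lemma P10 : p%:P + (1 - p)%:P = 1 :> {poly R}.
Proof. by rewrite -polyCD addrC subrK. Qed.

Definition dep (F : (nat * nat -> bool) -> {poly R}) (D : pred (nat * nat)) :=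
  forall g1 g2, (forall k, D k -> g1 k = g2 k) -> F g1 = F g2.

Lemma Ex_dep L F D g1 g2 : dep F D ->
  (forall k, D k -> k \notin L -> g1 k = g2 k) -> Ex L F g1 = Ex L F g2.
Proof.
elim: L g1 g2 => [|e L IH] g1 g2 hd H /=.
  by apply: hd => k Dk; apply: H.
congr (_ * _ + _ * _); apply: IH => // k Dk kL; rewrite /upd; case: eqP => // ne;
  apply: H => //; rewrite inE negb_or kL andbT; exact/eqP.
Qed.

Lemma Ex_ign L F F' g :
  (forall g', (forall k, k \notin L -> g' k = g k) -> F g' = F' g') -> Ex L F g = Ex L F' g.
Proof.
elim: L g => [|e L IH] g H /=; first by apply: H.
congr (_ * _ + _ * _); apply: IH => g' hg'; apply: H => k; rewrite inE negb_or => /andP[ke kL];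
  rewrite hg' // /upd; by rewrite (negbTE ke).
Qed.

Lemma Ex_scale L F c g : Ex L (fun g => c * F g) g = c * Ex L F g.
Proof. elim: L g => [|e L IH] g //=; rewrite !IH; ring. Qed.

Lemma Ex_add L F1 F2 g : Ex L (fun g => F1 g + F2 g) g = Ex L F1 g + Ex L F2 g.
Proof. elim: L g => [|e L IH] g //=; rewrite !IH; ring. Qed.

Lemma Ex_const L c g : Ex L (fun _ => c) g = c.
Proof. elim: L g => [|e L IH] g //=; rewrite !IH -mulrDl P10 mul1r //. Qed.

Lemma Ex_sub L F1 F2 g : Ex L (fun g => F1 g - F2 g) g = Ex L F1 g - Ex L F2 g.
Proof. elim: L g => [|e L IH] g //=; rewrite !IH; ring. Qed.

Lemma Ex_sum (I : Type) (r : seq I) (F : I -> (nat * nat -> bool) -> {poly R}) L g :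
  Ex L (fun g => \sum_(i <- r) F i g) g = \sum_(i <- r) Ex L (F i) g.
Proof.
elim: r => [|i r IH].
  have -> : (fun g : nat * nat -> bool => \sum_(i <- [::]) F i g) = fun _ => 0.
    by apply: funext => g'; rewrite big_nil.
  by rewrite Ex_const big_nil.
have -> : (fun g => \sum_(j <- i :: r) F j g) = fun g => F i g + \sum_(j <- r) F j g.
  by apply: funext => g'; rewrite big_cons.
by rewrite Ex_add IH big_cons.
Qed.

Lemma Ex_mul L (D1 D2 : pred (nat * nat)) c F g : (forall k, D1 k -> D2 k -> False) -> dep c D1 -> dep F D2 ->
  Ex L (fun g => c g * F g) g = Ex L c g * Ex L F g.
Proof.
move=> dis hc hF; elim: L g => [|e L IH] g //=; rewrite !IH.
rewrite polyCB polyC1.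
case D2e : (D2 e).
  have -> : Ex L c (upd g e true) = Ex L c (upd g e false).
    apply: (Ex_dep _ _ _ _ _ hc) => k Dk _; rewrite /upd; case: eqP => // ke.
    by exfalso; apply: (dis k) => //; rewrite ke.
  ring.
have -> : Ex L F (upd g e true) = Ex L F (upd g e false).
  apply: (Ex_dep _ _ _ _ _ hF) => k Dk _; rewrite /upd; case: eqP => // ke.
  by move: D2e; rewrite -ke Dk.
ring.
Qed.

Lemma Ex_filter L F D g : dep F D -> Ex L F g = Ex (filter D L) F g.
Proof.
move=> hd; elim: L g => [|e L IH] g //=.
case De : (D e) => /=; first by rewrite !IH.
rewrite !IH.
have H b : Ex (filter D L) F (upd g e b) = Ex (filter D L) F g.
  apply: (Ex_dep _ _ _ _ _ hd) => k Dk _; rewrite /upd; case: eqP => // ke.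
  by move: De; rewrite -ke Dk.
by rewrite !H -mulrDl P10 mul1r.
Qed.

Lemma Ex_swap a b L F g : Ex [:: a, b & L] F g = Ex [:: b, a & L] F g.
Proof.
case: (eqVneq a b) => [->//|ne] /=.
have comm x y : upd (upd g a x) b y = upd (upd g b y) a x.
  apply: funext => k; rewrite /upd; case: eqP => [->|]; case: eqP => // eb.
  by move: ne; rewrite eb eqxx.
rewrite !comm; ring.
Qed.

Lemma Ex_front s a t F g : Ex (s ++ a :: t) F g = Ex (a :: s ++ t) F g.
Proof.
elim: s g => [|x s IH] g //.
rewrite (Ex_swap a x) /= !IH //.
Qed.

Lemma Ex_perm L1 L2 F g : perm_eq L1 L2 -> Ex L1 F g = Ex L2 F g.
Proof.
elim: L1 L2 g => [|a L1 IH] L2 g hp.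
  by move: (perm_size hp); case: L2 hp.
have aL2 : a \in L2 by rewrite -(perm_mem hp) mem_head.
case/splitPr: aL2 hp => s t hp.
have hp' : perm_eq L1 (s ++ t).
  rewrite -(perm_cons a); apply: (perm_trans hp).
  by rewrite -[a :: t]cat1s perm_catCA.
by rewrite Ex_front /= !(IH (s ++ t)).
Qed.

Definition Zi (M : seq (nat * nat)) (g : nat * nat -> bool) : {poly R} :=
  (all (fun e => ~~ g e) M)%:R.

Lemma Ex_zero_gen L M g : uniq L -> {subset L <= M} ->
  Ex L (Zi M) g = (all (fun e => (e \in L) || ~~ g e) M)%:R * ((1 - p) ^+ size L)%:P.
Proof.
elim: L g => [|e L IH] g /=.
  by move=> _ _; rewrite expr0 polyC1 mulr1 /Zi; congr (_ %:R); apply: eq_all.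
move=> /andP[eL uL] sub.
have sub' : {subset L <= M} by move=> x xL; apply: sub; rewrite inE xL orbT.
rewrite !IH //.
have -> : all (fun e0 => (e0 \in L) || ~~ upd g e true e0) M = false.
  apply/negbTE/allPn; exists e; first by apply: sub; exact: mem_head.
  by rewrite /upd eqxx (negbTE eL).
have -> : all (fun e0 => (e0 \in L) || ~~ upd g e false e0) M =
          all (fun e0 => (e0 \in e :: L) || ~~ g e0) M.
  apply: eq_all => x; rewrite /upd inE; case: eqP => [->|] //=.
  by rewrite orbT.
by rewrite exprS polyCM mul0r mulr0 add0r mulrCA.
Qed.

Lemma Ex_zero L g : uniq L -> Ex L (Zi L) g = ((1 - p) ^+ size L)%:P.
Proof.
move=> uL; rewrite Ex_zero_gen //.
have -> : all (fun e => (e \in L) || ~~ g e) L by apply/allP => x ->.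
by rewrite mul1r.
Qed.

Definition shp i (e : nat * nat) := (e.1 + i, e.2 + i).

Lemma Ex_shift i L F g :
  Ex (map (shp i) L) (fun g => F (shift i g)) g = Ex L F (shift i g).
Proof.
elim: L g => [|e L IH] g //=; rewrite !IH.
have H b : shift i (upd g (shp i e) b) = upd (shift i g) e b.
  apply: funext => -[x y]; case: e => a c; rewrite /shift /upd /shp /=.
  by rewrite !xpair_eqE !eqn_add2r.
by rewrite !H.
Qed.

End ExSec.
Arguments Ex {R} p L F g.
Arguments Zi {R} M g.
Arguments dep {R} F D.

Definition Zs j (g : nat * nat -> bool) : bool := all (fun e => ~~ g e) (EL j).
Definition As i (g : nat * nat -> bool) : bool := Zs i g && ~~ Zs i.+1 g.

Lemma Zs_false j g a b : Zs j g -> a < b -> b < j -> g (a, b) = false.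
Proof.
by move=> /allP H ab bj; apply/negbTE/H; rewrite mem_EL ab bj.
Qed.

Arguments Zs_false {j g a b}.

Lemma Zs_true j g : (forall a b, a < b -> b < j -> g (a, b) = false) -> Zs j g.
Proof.
by move=> H; apply/allP => -[a b]; rewrite mem_EL => /andP[ab bj]; rewrite H.
Qed.

Lemma Zs_mono j k g : j <= k -> Zs k g -> Zs j g.
Proof.
move=> jk Zk; apply: Zs_true => a b ab bj; apply: (Zs_false Zk) => //; lia.
Qed.

Lemma Zs_dep j g1 g2 : (forall e, e \in EL j -> g1 e = g2 e) -> Zs j g1 = Zs j g2.
Proof. by move=> H; apply: eq_in_all => e /H ->. Qed.

Lemma EL_filter k n : k <= n ->
  perm_eq (filter (fun e => (e.1 < e.2) && (e.2 < k)) (EL n)) (EL k).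
Proof.
move=> kn; apply: uniq_perm; rewrite ?filter_uniq ?uniq_EL //.
move=> [a b]; rewrite mem_filter !mem_EL /=.
apply/idP/idP => /andP[] => [/andP[h1 h2] _|h1 h2]; rewrite h1 h2 //=; lia.
Qed.

Lemma EL_filter_shift i n : i <= n ->
  perm_eq (filter (fun e => (e.1 < e.2) && (i <= e.1)) (EL n)) (map (shp i) (EL (n - i))).
Proof.
move=> kn; apply: uniq_perm; rewrite ?filter_uniq ?uniq_EL //.
  rewrite map_inj_uniq ?uniq_EL // => -[a b] [c d] [/addIn -> /addIn ->] //.
move=> [a b]; rewrite mem_filter !mem_EL /=.
apply/idP/mapP => [/andP[/andP[ab ia] /andP[_ bn]]|[[c d] h [-> ->]]].
  exists (a - i, b - i); last by rewrite /shp /=; congr pair; lia.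
  rewrite mem_EL; lia.
move: h; rewrite mem_EL => /andP[cd dn].
apply/andP; split; apply/andP; split; lia.
Qed.

Section Main.
Variables (R : realFieldType) (p : R).
Local Open Scope ring_scope.

Lemma Wg_upd (T : finType) (h : T -> nat * nat) (hinj : injective h) (f0 : {ffun T -> bool}) a b :
  Wg h [ffun e => if e == a then b else f0 e] = upd (Wg h f0) (h a) b.
Proof.
apply: funext => k; rewrite /Wg /upd; case: eqP => [->|ne].
  apply/existsP/idP => [[e /andP[/eqP /hinj -> ]]|hb]; first by rewrite ffunE eqxx.
  by exists a; rewrite eqxx ffunE eqxx.
apply: eq_existsb => e; rewrite ffunE; case: (eqVneq e a) => [->|//].
by have -> : (h a == k) = false by apply/eqP => E; apply: ne; rewrite E.
Qed.

Lemma bridge (T : finType) (h : T -> nat * nat) (hinj : injective h)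
  (F : (nat * nat -> bool) -> {poly R}) (s : seq T) (f0 : {ffun T -> bool}) : uniq s ->
  \sum_(f : {ffun T -> bool} | [forall e, (e \notin s) ==> (f e == f0 e)])
     ((\prod_(e <- s) (if f e then p else 1 - p)%:P) * F (Wg h f))
  = Ex p (map h s) F (Wg h f0).
Proof.
elim: s f0 => [|a s IH] f0 /=.
  move=> _; rewrite (big_pred1 f0) ?big_nil ?mul1r //.
  move=> f /=; apply/forallP/eqP => [H|-> e]; last by rewrite eqxx.
  by apply/ffunP => e; apply/eqP; exact: H.
move=> /andP[aS uS].
rewrite (bigID (fun f : {ffun T -> bool} => f a)) /=.
have E (b : bool) :
  \sum_(f : {ffun T -> bool} | [forall e, (e \notin a :: s) ==> (f e == f0 e)] && (f a == b))
     ((\prod_(e <- a :: s) (if f e then p else 1 - p)%:P) * F (Wg h f))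
  = (if b then p else 1 - p)%:P *
    \sum_(f : {ffun T -> bool} | [forall e, (e \notin s) ==> (f e == [ffun e => if e == a then b else f0 e] e)])
     ((\prod_(e <- s) (if f e then p else 1 - p)%:P) * F (Wg h f)).
  rewrite mulr_sumr; apply: eq_big => [f|f /andP[_ /eqP fa]]; last first.
    by rewrite big_cons fa mulrA.
  apply/andP/forallP => [[/forallP H /eqP fa] e|H].
    apply/implyP => es; rewrite ffunE; case: (eqVneq e a) => [->|ne]; first by rewrite fa.
    by have := H e; rewrite inE negb_or es andbT; move/implyP; apply; exact: ne.
  split.
    apply/forallP => e; apply/implyP; rewrite inE negb_or => /andP[ea es].
    by have := H e; rewrite es /= ffunE (negbTE ea).
  by have := H a; rewrite aS ffunE eqxx.
have -> : \sum_(f : {ffun T -> bool} | [forall e, (e \notin a :: s) ==> (f e == f0 e)] && f a)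
     ((\prod_(e <- a :: s) (if f e then p else 1 - p)%:P) * F (Wg h f)) =
     \sum_(f : {ffun T -> bool} | [forall e, (e \notin a :: s) ==> (f e == f0 e)] && (f a == true))
     ((\prod_(e <- a :: s) (if f e then p else 1 - p)%:P) * F (Wg h f)).
  by apply: eq_bigl => f; case: (f a).
have -> : \sum_(f : {ffun T -> bool} | [forall e, (e \notin a :: s) ==> (f e == f0 e)] && ~~ f a)
     ((\prod_(e <- a :: s) (if f e then p else 1 - p)%:P) * F (Wg h f)) =
     \sum_(f : {ffun T -> bool} | [forall e, (e \notin a :: s) ==> (f e == f0 e)] && (f a == false))
     ((\prod_(e <- a :: s) (if f e then p else 1 - p)%:P) * F (Wg h f)).
  by apply: eq_bigl => f; case: (f a).
by rewrite !E !IH // !Wg_upd.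
Qed.

Lemma hE_inj n : injective (@hE n).
Proof.
move=> [[x1 y1] e1] [[x2 y2] e2]; rewrite /hE /= => -[/val_inj ex /val_inj ey].
by apply: val_inj => /=; rewrite ex ey.
Qed.

Lemma EY_Ex n : EY p n = Ex p (EL n) (fun g => 'X^(XM n g)) (fun _ => false).
Proof.
have := @bridge _ (@hE n) (@hE_inj n) (fun g => 'X^(XM n g)) (index_enum _) [ffun => false] (index_enum_uniq _).
have -> : Wg (@hE n) [ffun => false] = fun _ => false.
  by apply: funext => k; apply/existsP => -[e]; rewrite ffunE andbF.
have hperm : perm_eq [seq hE n i | i <- index_enum (edge n)] (EL n).
  apply: uniq_perm; rewrite ?uniq_EL ?map_inj_uniq ?index_enum_uniq //; first exact: hE_inj.
  move=> [a b]; rewrite mem_EL; apply/mapP/andP => [[[[i j] ij] _ [-> ->]]|[ab bn]].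
    by split => //; exact: ltn_ord.
  by exists (exist _ (Ordinal (ltn_trans ab bn), Ordinal bn) ab); rewrite ?mem_index_enum.
rewrite (@Ex_perm _ p _ (EL n) _ _ hperm) => <-.
rewrite /EY; symmetry; rewrite (eq_bigl predT) => [|f]; last first.
  by apply/forallP => e; rewrite mem_index_enum.
apply: eq_bigr => w _; rewrite /prob rmorph_prod //.
Qed.

End Main.

Arguments Zs_mono {j k g}.
Lemma Zs1 g : Zs 1 g. Proof. by []. Qed.

Lemma Zs_S i g : Zs i.+1 g = Zs i g && all (fun e => ~~ g e) [seq (a, i) | a <- iota 0 i].
Proof. by rewrite /Zs /= all_cat. Qed.

Section Main2.
Variables (R : realFieldType) (p : R).
Local Open Scope ring_scope.

Lemma decomp n g : (0 < n)%N ->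
  'X^(XM n g) = \sum_(1 <= i < n) (As i g)%:R * ('X * 'X^(XM (n - i) (shift i g)))
                + (Zs n g)%:R :> {poly R}.
Proof.
move=> n0; rewrite XM_B //.
case Zn : (Zs n g).
  rewrite big1_seq ?add0r; last first.
    move=> i /andP[_]; rewrite mem_index_iota => /andP[i1 iN].
    by rewrite /As (Zs_mono (_ : i.+1 <= n)%N Zn) ?andbF ?mul0r.
  rewrite B_zero ?expr0 // => a b ab bn; apply: (Zs_false Zn) => //; lia.
have n1 : (1 < n)%N.
  by case: n n0 Zn => [|[|n]] //.
have exP : exists j, (j < n)%N && Zs j g by exists 1%N; rewrite Zs1 n1.
have ub : forall j, (j < n)%N && Zs j g -> (j <= n)%N by move=> j /andP[/ltnW].
case: (ex_maxnP exP ub) => i /andP[iN Zi] imax.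
have i1 : (0 < i)%N by have := imax 1%N; rewrite n1 Zs1 => /(_ isT).
have Ai : As i g.
  rewrite /As Zi /=; apply/negP => Zi1.
  case: (ltnP i.+1 n) => h; first by have := imax i.+1; rewrite h Zi1 ltnn => /(_ isT).
  have E : i.+1 = n by lia.
  by rewrite E Zn in Zi1.
have Aj : forall j, j != i -> (1 <= j < n)%N -> As j g = false.
  move=> j ji /andP[j1 jn]; rewrite /As.
  case: (ltngtP j i) => [lt|gt|eq]; last by rewrite eq eqxx in ji.
    by rewrite (Zs_mono (_ : j.+1 <= i)%N Zi) ?andbF.
  case Zj : (Zs j g) => //.
  by have := imax j; rewrite jn Zj => /(_ isT); rewrite leqNgt gt.
rewrite (bigD1_seq i) /=; last by rewrite /index_iota iota_uniq.
  2: by rewrite mem_index_iota; apply/andP; split => //; lia.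
rewrite big1_seq ?Ai /= ?mul1r ?addr0; last first.
  by move=> j /andP[ji]; rewrite mem_index_iota => hj; rewrite Aj ?mul0r.
rewrite XM_B; last lia.
have [a0 a0i ga0] : exists2 a, (a < i)%N & g (a, i).
  have := Ai; rewrite /As Zs_S Zi /= => /allPn [e /mapP[a]].
  by rewrite mem_iota add0n => /andP[_ ai] -> /negPn ga; exists a.
rewrite (@B_Ai n.-1 i g) ?exprS; last by exists a0.
- by have -> : ((n - i).-1 = n.-1 - i)%N by lia.
- by apply/andP; split => //; lia.
by move=> a b ab bi; apply: (Zs_false Zi).
Qed.

End Main2.

Section Main3.
Variables (R : realFieldType) (p : R).
Local Open Scope ring_scope.

Lemma recur n : (1 <= n)%N ->
     EY p n =
       \sum_(1 <= i < n)
          'X * ((1 - p) ^+ 'C(i, 2) - (1 - p) ^+ 'C(i.+1, 2))%:P * EY p (n - i)%N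
       + ((1 - p) ^+ 'C(n, 2))%:P.
Proof.
move=> n0; rewrite EY_Ex.
have -> : (fun g => 'X^(XM n g)) = fun g =>
    \sum_(1 <= i < n) (As i g)%:R * ('X * 'X^(XM (n - i) (shift i g)))
                + (Zs n g)%:R :> {poly R}.
  by apply: funext => g; rewrite (@decomp R n g n0).
rewrite Ex_add Ex_sum.
congr (_ + _); last first.
  have -> : (fun g => (Zs n g)%:R) = Zi (R := R) (EL n) by [].
  by rewrite Ex_zero ?uniq_EL // size_EL.
apply: eq_big_nat => i /andP[i1 iN].
pose D1 := fun e : nat * nat => (e.1 < e.2)%N && (e.2 < i.+1)%N.
pose D2 := fun e : nat * nat => (e.1 < e.2)%N && (i <= e.1)%N.
have dA : dep (fun g => (As i g)%:R : {poly R}) D1.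
  move=> g1 g2 H; rewrite /As (@Zs_dep i g1 g2) ?(@Zs_dep i.+1 g1 g2) // => e;
    rewrite mem_EL' => /andP[h1 h2]; apply: H; rewrite /D1 h1 /=; first [exact: h2 | exact: ltnW h2].
have dP : dep (fun g => 'X^(XM (n - i) (shift i g)) : {poly R}) D2.
  move=> g1 g2 H; rewrite !XM_B; try lia.
  congr ('X^ _); apply: B_local => a b ab _; rewrite /shift /=; apply: H.
  by rewrite /D2 /= ltn_add2r ab leq_addl.
rewrite (@Ex_mul _ p _ D1 D2); last first.
- move=> g1 g2 H; rewrite (dP g1 g2 H) //.
- exact: dA.
- by move=> [a b]; rewrite /D1 /D2 /= => /andP[_ h1] /andP[h2 h3]; lia.
rewrite Ex_scale.
have -> : Ex p (EL n) (fun g => 'X^(XM (n - i) (shift i g))) (fun _ => false) = EY p (n - i).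
  rewrite (@Ex_filter _ p _ _ D2 _ dP) (@Ex_perm _ p _ _ _ _ (@EL_filter_shift i n (ltnW iN))).
  by rewrite (@Ex_shift _ p i (EL (n - i)) (fun g => 'X^(XM (n - i) g))) EY_Ex.
have -> : Ex p (EL n) (fun g => (As i g)%:R) (fun _ => false) =
          ((1 - p) ^+ 'C(i, 2) - (1 - p) ^+ 'C(i.+1, 2))%:P.
  rewrite (@Ex_filter _ p _ _ D1 _ dA) (@Ex_perm _ p _ _ _ _ (@EL_filter i.+1 n iN)).
  have -> : (fun g => (As i g)%:R) = fun g => (Zs i g)%:R - (Zs i.+1 g)%:R :> {poly R}.
    apply: funext => g; rewrite /As.
    have := @Zs_mono i i.+1 g (leqnSn _).
    move=> H; case: (Zs i g) H; case: (Zs i.+1 g) => /= H; rewrite ?subrr ?subr0 //; by have := H isT.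
  rewrite Ex_sub polyCB.
  have -> : (fun g => (Zs i.+1 g)%:R) = Zi (R := R) (EL i.+1) by [].
  rewrite Ex_zero ?uniq_EL // size_EL; congr (_ - _).
  pose D := fun e : nat * nat => (e.1 < e.2)%N && (e.2 < i)%N.
  have dZ : dep (fun g => (Zs i g)%:R : {poly R}) D.
    move=> g1 g2 H; rewrite (@Zs_dep i g1 g2) // => e.
    by rewrite mem_EL' => /andP[h1 h2]; apply: H; rewrite /D h1.
  rewrite (@Ex_filter _ p _ _ D _ dZ) (@Ex_perm _ p _ _ _ _ (@EL_filter i i.+1 (leqnSn _))).
  have -> : (fun g => (Zs i g)%:R) = Zi (R := R) (EL i) by [].
  by rewrite Ex_zero ?uniq_EL // size_EL.
by rewrite mulrCA mulrA.
Qed.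

End Main3.

Local Open Scope ring_scope.

Section Inv.
Variable (T : comUnitRingType).

Lemma inv_size (f : fps T) m : size (inv_coefs f m) = m.+1.
Proof. by elim: m => [|m IH] //=; rewrite size_rcons IH. Qed.

Lemma inv_nth (f : fps T) m j : (j <= m)%N -> nth 0 (inv_coefs f m) j = fps_inv f j.
Proof.
elim: m j => [|m IH] j; first by rewrite leqn0 => /eqP ->.
rewrite leq_eqVlt => /orP[/eqP -> //|jm].
by rewrite /= nth_rcons inv_size jm IH.
Qed.

Lemma inv_rec (f : fps T) m : fps_inv f m.+1 =
  - (f 0%N)^-1 * \sum_(k < m.+1) f k.+1 * fps_inv f (m - k)%N.
Proof.
rewrite {1}/fps_inv /= nth_rcons inv_size ltnn eqxx.
by congr (_ * _); apply: eq_bigr => k _; rewrite inv_nth // leq_subr.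
Qed.

Lemma inv_key (f : fps T) m : f 0%N = 1 ->
  fps_mul f (fps_inv f) m = (m == 0%N)%:R.
Proof.
move=> f0; rewrite /fps_mul; case: m => [|m].
  by rewrite big_ord1 f0 /fps_inv /= f0 invr1 mul1r.
rewrite big_ord_recl /= f0 mul1r inv_rec f0 invr1 mulN1r.
rewrite addrC; apply/eqP; rewrite subr_eq0; apply/eqP.
by apply: eq_bigr => k _; rewrite /bump /= add1n subSS.
Qed.

Definition toP (a : fps T) N : {poly T} := \poly_(j < N) a j.
Arguments toP : clear implicits.

Lemma fps_mulP (a b : fps T) N m : (m < N)%N ->
  fps_mul a b m = (toP a N * toP b N)`_m.
Proof.
move=> mN; rewrite coefM /fps_mul; apply: eq_bigr => j _.
have := ltn_ord j; rewrite !coef_poly ltnS => jm.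
by rewrite (leq_ltn_trans jm mN) (leq_ltn_trans (leq_subr _ _) mN).
Qed.

Lemma agree_mul (P P' Q : {poly T}) N :
  (forall m, (m < N)%N -> P`_m = P'`_m) -> forall m, (m < N)%N -> (P * Q)`_m = (P' * Q)`_m.
Proof.
move=> H m mN; rewrite !coefM; apply: eq_bigr => j _.
have := ltn_ord j; rewrite ltnS => jm.
by rewrite H // (leq_ltn_trans jm mN).
Qed.

End Inv.
Arguments toP {T} a N.

Section Fps.
Variables (R : realFieldType) (p : R).

Definition Wk (k : nat) : {poly R} := if k == 0%N then 0 else EY p k.
Definition Ff : fps {poly R} := fps_sub fps_one (fps_scale 'X (fps_sub (Ap p) (Bp p))).

Lemma Ff0 : Ff 0%N = 1.
Proof. by rewrite /Ff /fps_sub /fps_one /fps_scale /Ap /Bp /= subrr mulr0 subr0. Qed.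

Lemma FfS k : Ff k.+1 = - ('X * ((1 - p) ^+ 'C(k.+1, 2) - (1 - p) ^+ 'C(k.+2, 2))%:P).
Proof. by rewrite /Ff /fps_sub /fps_one /fps_scale /Ap /Bp /= polyCB sub0r. Qed.

Lemma FW m : fps_mul Ff Wk m = fps_xmul (Bp p) m.
Proof.
rewrite /fps_mul; case: m => [|m]; first by rewrite big_ord1 /Wk /= mulr0.
rewrite big_ord_recl /= Ff0 mul1r /Wk /= (@recur R p m.+1 (ltn0Sn m)).
rewrite /fps_xmul /Bp.
case: m => [|m].
  by rewrite big_ord1 big_geq // add0r /= mulr0 addr0.
rewrite big_ord_recr /= subnn eqxx mulr0 addr0.
have HS : \sum_(i < m.+1) Ff (bump 0 i) *
     (if (m.+2 - bump 0 i)%N == 0%N then 0 else EY p (m.+2 - bump 0 i)) =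
   - \sum_(1 <= i < m.+2)
     'X * ((1 - p) ^+ 'C(i, 2) - (1 - p) ^+ 'C(i.+1, 2))%:P * EY p (m.+2 - i).
  rewrite -sumrN big_add1 /= big_mkord.
  apply: eq_bigr => k _; rewrite /bump /= add1n FfS.
  have -> : (m.+2 - k.+1 == 0)%N = false.
    by apply/negbTE; rewrite subn_eq0 -ltnNge ltnS; exact: ltn_ord.
  by rewrite mulNr.
by rewrite HS addrAC subrr add0r.
Qed.


Lemma final k : Wk k = fps_mul (fps_xmul (Bp p)) (fps_inv Ff) k.
Proof.
set N := k.+1.
have kN : (k < N)%N by [].
have h1 : forall m, (m < N)%N -> (toP Ff N * toP (fps_inv Ff) N)`_m = (1 : {poly {poly R}})`_m.
  move=> m mN; rewrite -fps_mulP // inv_key ?Ff0 // coefC.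
  by case: (m == 0%N).
have h2 : forall m, (m < N)%N -> (toP Ff N * toP Wk N)`_m = (toP (fps_xmul (Bp p)) N)`_m.
  by move=> m mN; rewrite -fps_mulP // FW coef_poly mN.
rewrite (@fps_mulP _ _ _ _ _ kN).
rewrite -(@agree_mul _ _ _ (toP (fps_inv Ff) N) _ h2 _ kN).
have -> : toP Ff N * toP Wk N * toP (fps_inv Ff) N =
          (toP Ff N * toP (fps_inv Ff) N) * toP Wk N by ring.
rewrite (@agree_mul _ _ _ (toP Wk N) _ h1 _ kN) mul1r coef_poly kN //.
Qed.

End Fps.

Local Open Scope ring_scope.

Theorem theorem3 (R : realFieldType) (p : R) (hp0 : 0 < p) (hp1 : p < 1) :
  (forall n : nat, (1 <= n)%N ->
     EY p n =
       \sum_(1 <= i < n)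
          'X * ((1 - p) ^+ 'C(i, 2) - (1 - p) ^+ 'C(i.+1, 2))%:P * EY p (n - i)%N
       + ((1 - p) ^+ 'C(n, 2))%:P)
  /\
  (forall k : nat,
     Zser p k =
       fps_add fps_one
         (fps_mul (fps_xmul (Bp p))
                  (fps_inv (fps_sub fps_one
                              (fps_scale 'X (fps_sub (Ap p) (Bp p)))))) k).
Proof.
split; first exact: (@recur R p).
move=> k; rewrite /fps_add -(@final R p k) /Wk /Zser /fps_one.
by case: k => [|k] /=; rewrite ?addr0 ?add0r.
Qed.
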